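(* Let $H\in\mathbb{R}^{N\times n}$ and $Y\in\mathbb{R}^{N\times k}$ with $H^TH$ positive definite, let $c\ge 0$ be an integer, and let $R\in\mathbb{R}^{n\times n}$ be symmetric positive semidefinite with $\rho(F(R))<1$, where $F(R):=R(H^TH+R)^{-1}$ and $\rho$ denotes the spectral radius. Define the high-order regularization solution $$\hat\beta_{hr}=(H^TH+R)^{-1}\sum_{i=0}^{c}F(R)^i\,H^TY,$$ the optimal solution $\beta_{opt}=H^{\dagger}Y=(H^TH)^{-1}H^TY$, and the error $e_\beta=\hat\beta_{hr}-\beta_{opt}$. Then $$\lim_{R\to O}\|e_\beta\|=0\quad\text{and}\quad \lim_{R\to O}\left\|(H^TH+R)^{-1}F(R)H^TY\right\|=0,$$ where $O$ is the zero matrix and the limit is over symmetric positive semidefinite $R$, and, for fixed such $R$, $$\lim_{c\to+\infty}\|e_\beta\|=0.$$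
   Context: $\|\cdot\|$ denotes the 2-norm (spectral norm for matrices). $H^{\dagger}$ is the Moore–Penrose pseudo-inverse. $R$ is called the regularization matrix and $c$ the regularization order. *)

(* Defs.v *)
From HB Require Import structures.
From mathcomp Require Import all_boot all_order all_algebra.
From mathcomp Require Import complex.
From mathcomp Require Import all_classical all_reals.
From mathcomp Require Import topology normedtype sequences.
Set Implicit Arguments. Unset Strict Implicit. Unset Printing Implicit Defensive.
Import Order.TTheory GRing.Theory Num.Theory.
Local Open Scope ring_scope.
Local Open Scope classical_set_scope.

Definition vnorm {R : realType} {n : nat} (x : 'cV[R]_n) : R :=
  Num.sqrt (\sum_(i < n) x i 0 ^+ 2).

Definition specnorm {R : realType} {m n : nat} (A : 'M[R]_(m, n)) : R :=
  sup [set vnorm (A *m x) | x in [set x : 'cV[R]_n | vnorm x = 1]].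

Definition complexify {R : realType} {n : nat} (A : 'M[R]_n) : 'M[R[i]]_n :=
  map_mx (fun a : R => a%:C%C) A.

Definition spectral_radius {R : realType} {n : nat} (A : 'M[R]_n) : R :=
  sup [set Normc.normc z | z in [set z : R[i] | eigenvalue (complexify A) z]].

Definition is_sym {R : realType} {n : nat} (A : 'M[R]_n) : Prop := A^T = A.

Definition is_psd {R : realType} {n : nat} (A : 'M[R]_n) : Prop :=
  is_sym A /\ forall x : 'cV[R]_n, 0 <= (x^T *m A *m x) 0 0.

Definition is_pd {R : realType} {n : nat} (A : 'M[R]_n) : Prop :=
  is_sym A /\ forall x : 'cV[R]_n, x != 0 -> 0 < (x^T *m A *m x) 0 0.

Definition Fmat {R : realType} {N n : nat} (H : 'M[R]_(N, n)) (Rg : 'M[R]_n)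
  : 'M[R]_n := Rg *m invmx (H^T *m H + Rg).

Definition beta_hr {R : realType} {N n k : nat} (H : 'M[R]_(N, n))
  (Y : 'M[R]_(N, k)) (Rg : 'M[R]_n) (c : nat) : 'M[R]_(n, k) :=
  invmx (H^T *m H + Rg) *m
    (\sum_(i < c.+1) (Fmat H Rg ^+ i) *m (H^T *m Y)).

Definition beta_opt {R : realType} {N n k : nat} (H : 'M[R]_(N, n))
  (Y : 'M[R]_(N, k)) : 'M[R]_(n, k) :=
  invmx (H^T *m H) *m (H^T *m Y).

Definition e_beta {R : realType} {N n k : nat} (H : 'M[R]_(N, n))
  (Y : 'M[R]_(N, k)) (Rg : 'M[R]_n) (c : nat) : 'M[R]_(n, k) :=
  beta_hr H Y Rg c - beta_opt H Y.

(* Main.v *)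
Require Import Defs.
From HB Require Import structures.
From mathcomp Require Import all_boot all_order all_algebra.
From mathcomp Require Import complex.
From mathcomp Require Import all_classical all_reals.
From mathcomp Require Import topology normedtype sequences.
Import Order.TTheory GRing.Theory Num.Theory.
Import numFieldNormedType.Exports.
Local Open Scope ring_scope.
Local Open Scope classical_set_scope.
From mathcomp Require Import lra ring.
Set Implicit Arguments. Unset Strict Implicit. Unset Printing Implicit Defensive.
Definition bil {R : realType} {n : nat} (P : 'M[R]_n) (x y : 'cV[R]_n) : R :=
  (x^T *m P *m y) 0 0.
Definition sq {R : realType} {n : nat} (x : 'cV[R]_n) : R :=
  \sum_(i < n) x i 0 ^+ 2.

Lemma discr (R : realType) (a b c : R) : 0 <= a ->
  (forall t, 0 <= a * t ^+ 2 + 2 * b * t + c) -> b ^+ 2 <= a * c.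
Proof.
move=> a0 H.
have [ap|] := ltrP 0 a.
  have := H (- b / a).
  have -> : a * (- b / a) ^+ 2 + 2 * b * (- b / a) + c = c - b ^+ 2 / a.
    by field; rewrite gt_eqF.
  rewrite subr_ge0 ler_pdivrMr // => h. by rewrite mulrC.
move=> a0'. have a00 : a = 0 by apply/eqP; rewrite eq_le a0' a0.
subst a.
have [b0|bn0] := eqVneq b 0.
  by rewrite b0 expr0n /= mul0r.
have := H (- (c + 1) / (2 * b)).
have -> : 0 * (- (c + 1) / (2 * b)) ^+ 2 + 2 * b * (- (c + 1) / (2 * b)) + c = -1.
  by field.
lra.
Qed.

Lemma bilE (R : realType) (n : nat) (P : 'M[R]_n) (x y : 'cV[R]_n) :
  bil P x y = \sum_j \sum_i x i 0 * P i j * y j 0.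
Proof.
rewrite /bil !mxE. apply: eq_bigr => j _. rewrite !mxE mulr_suml.
apply: eq_bigr => i _. by rewrite !mxE.
Qed.

Lemma bil_sym (R : realType) (n : nat) (P : 'M[R]_n) (x y : 'cV[R]_n) :
  Defs.is_sym P -> bil P y x = bil P x y.
Proof.
move=> sP. rewrite /bil. transitivity ((y^T *m P *m x)^T 0 0); first by rewrite [RHS]mxE.
by rewrite trmx_mul trmx_mul trmxK sP mulmxA.
Qed.

Lemma bilDr (R : realType) (n : nat) (P : 'M[R]_n) (x y z : 'cV[R]_n) :
  bil P x (y + z) = bil P x y + bil P x z.
Proof. by rewrite /bil mulmxDr mxE. Qed.
Lemma bilDl (R : realType) (n : nat) (P : 'M[R]_n) (x y z : 'cV[R]_n) :
  bil P (y + z) x = bil P y x + bil P z x.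
Proof. by rewrite /bil linearD /= !mulmxDl mxE. Qed.
Lemma bilZr (R : realType) (n : nat) (P : 'M[R]_n) (x y : 'cV[R]_n) (t : R) :
  bil P x (t *: y) = t * bil P x y.
Proof. by rewrite /bil -scalemxAr mxE. Qed.
Lemma bilZl (R : realType) (n : nat) (P : 'M[R]_n) (x y : 'cV[R]_n) (t : R) :
  bil P (t *: y) x = t * bil P y x.
Proof. by rewrite /bil linearZ /= -!scalemxAl mxE. Qed.

Lemma CS (R : realType) (n : nat) (P : 'M[R]_n) (x y : 'cV[R]_n) : is_psd P ->
  bil P x y ^+ 2 <= bil P x x * bil P y y.
Proof.
move=> [sP pP].
rewrite mulrC; apply: discr; first exact: pP.
move=> t. have := pP (x + t *: y).
rewrite -/(bil P _ _) bilDl !bilDr !bilZl !bilZr (@bil_sym _ _ P x y sP).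
move=> h. apply: le_trans h _. rewrite le_eqVlt; apply/orP; left; apply/eqP. ring.
Qed.

Lemma bil1 (R : realType) (n : nat) (x y : 'cV[R]_n) :
  bil 1%:M x y = \sum_i x i 0 * y i 0.
Proof. rewrite /bil mulmx1 mxE; apply: eq_bigr => i _; by rewrite mxE. Qed.

Lemma sqE (R : realType) (n : nat) (x : 'cV[R]_n) : sq x = bil 1%:M x x.
Proof. by rewrite bil1 /sq; apply: eq_bigr => i _; rewrite expr2. Qed.

Lemma sq_ge0 (R : realType) (n : nat) (x : 'cV[R]_n) : 0 <= sq x.
Proof. by apply: sumr_ge0 => i _; rewrite sqr_ge0. Qed.

Lemma psd1 (R : realType) (n : nat) : is_psd (1%:M : 'M[R]_n).
Proof. split; first by rewrite /Defs.is_sym trmx1. move=> x. rewrite -/(bil _ _ _) -sqE. exact: sq_ge0. Qed.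

Lemma vCS (R : realType) (n : nat) (x y : 'cV[R]_n) :
  (\sum_i x i 0 * y i 0) ^+ 2 <= sq x * sq y.
Proof. rewrite -bil1 !sqE. apply: CS. exact: psd1. Qed.

Definition frob {R : realType} {m n : nat} (P : 'M[R]_(m, n)) : R :=
  \sum_i \sum_j P i j ^+ 2.
Definition bnd {R : realType} {m n : nat} (P : 'M[R]_(m, n)) (K : R) : Prop :=
  forall x, sq (P *m x) <= K * sq x.

Lemma frob_ge0 (R : realType) (m n : nat) (P : 'M[R]_(m, n)) : 0 <= frob P.
Proof. by apply: sumr_ge0 => i _; apply: sumr_ge0 => j _; rewrite sqr_ge0. Qed.

Lemma bnd_frob (R : realType) (m n : nat) (P : 'M[R]_(m, n)) : bnd P (frob P).
Proof.
move=> x. rewrite /sq /frob mulr_suml. apply: ler_sum => i _.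
have := vCS (\col_j P i j) x. rewrite mxE.
have -> : \sum_i0 (\col_j P i j) i0 0 * x i0 0 = \sum_j P i j * x j 0.
  by apply: eq_bigr => j _; rewrite mxE.
move=> h; apply: le_trans h _. rewrite /sq. apply: ler_wpM2r; first exact: sq_ge0.
by rewrite le_eqVlt; apply/orP; left; apply/eqP; apply: eq_bigr => j _; rewrite mxE.
Qed.

Lemma bnd_le (R : realType) (m n : nat) (P : 'M[R]_(m, n)) K K' :
  bnd P K -> K <= K' -> bnd P K'.
Proof. move=> h kk x. apply: le_trans (h x) _. apply: ler_wpM2r => //; exact: sq_ge0. Qed.

Lemma bnd_mul (R : realType) (m n p : nat) (P : 'M[R]_(m, n)) (Q : 'M[R]_(n, p)) K1 K2 :
  0 <= K1 -> bnd P K1 -> bnd Q K2 -> bnd (P *m Q) (K1 * K2).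
Proof.
move=> k1 hP hQ x. rewrite -mulmxA. apply: le_trans (hP _) _.
rewrite -mulrA. by apply: ler_wpM2l.
Qed.

Lemma bnd_ge0 (R : realType) (m n : nat) (P : 'M[R]_(m, n)) K :
  bnd P K -> (0 < n)%N -> 0 <= K.
Proof.
move=> h n0. pose x : 'cV[R]_n := delta_mx (Ordinal n0) 0.
have := h x. have -> : sq x = 1.
  rewrite /sq (bigD1 (Ordinal n0)) //= big1 ?addr0.
    by rewrite mxE !eqxx expr1n.
  by move=> i /negbTE ne; rewrite mxE ne /= expr0n.
rewrite mulr1 => h'. apply: le_trans h'. exact: sq_ge0.
Qed.

Lemma sqZ (R : realType) (n : nat) (a : R) (x : 'cV[R]_n) : sq (a *: x) = a ^+ 2 * sq x.
Proof. rewrite /sq mulr_sumr; apply: eq_bigr => i _; by rewrite mxE exprMn. Qed.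

Lemma sqN (R : realType) (n : nat) (x : 'cV[R]_n) : sq (- x) = sq x.
Proof. by rewrite -scaleN1r sqZ sqrrN expr1n mul1r. Qed.

Lemma sq_eq0 (R : realType) (n : nat) (x : 'cV[R]_n) : sq x = 0 -> x = 0.
Proof.
move=> /eqP; rewrite psumr_eq0; last by move=> i _; rewrite sqr_ge0.
move=> /allP h. apply/matrixP => i j. rewrite (ord1 j) mxE.
have := h i (mem_index_enum i). by rewrite /= sqrf_eq0 => /eqP.
Qed.

Lemma bnd_pow (R : realType) (n : nat) (P : 'M[R]_n) t m :
  0 <= t -> t <= 1 -> bnd P t -> bnd (P ^+ m.+1) t.
Proof.
move=> t0 t1 h. elim: m => [|m IH]; first by rewrite expr1.
rewrite exprS -mulmxE. have := bnd_mul t0 h IH. move/bnd_le; apply.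
by rewrite -[X in _ <= X]mul1r ler_wpM2r.
Qed.

Lemma vnormE (R : realType) (n : nat) (x : 'cV[R]_n) : vnorm x = Num.sqrt (sq x).
Proof. by []. Qed.

Lemma sq0 (R : realType) (n : nat) : sq (0 : 'cV[R]_n) = 0.
Proof. by rewrite /sq big1 // => i _; rewrite mxE expr0n. Qed.

Lemma specnorm_ub (R : realType) (m n : nat) (P : 'M[R]_(m, n)) :
  has_ubound [set vnorm (P *m x) | x in [set x : 'cV[R]_n | vnorm x = 1]].
Proof.
exists (Num.sqrt (frob P)) => z [x /= x1 <-].
rewrite vnormE ler_sqrt; last exact: frob_ge0.
have := bnd_frob P x. have -> : sq x = 1.
  by rewrite -[sq x]sqr_sqrtr ?sq_ge0 // -vnormE x1 expr1n.
by rewrite mulr1.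
Qed.

Lemma specnorm_le (R : realType) (m n : nat) (P : 'M[R]_(m, n)) K :
  bnd P K -> 0 <= K -> specnorm P <= Num.sqrt K.
Proof.
move=> h K0. rewrite /specnorm.
case: (pselect ([set vnorm (P *m x) | x in [set x : 'cV[R]_n | vnorm x = 1]] !=set0)) => ne.
  apply: ge_sup => // z [x /= x1 <-].
  rewrite vnormE ler_sqrt //.
  have := h x. have -> : sq x = 1.
    by rewrite -[sq x]sqr_sqrtr ?sq_ge0 // -vnormE x1 expr1n.
  by rewrite mulr1.
have -> : [set vnorm (P *m x) | x in [set x : 'cV[R]_n | vnorm x = 1]] = set0.
  by apply/seteqP; split => // z Sz; exfalso; apply: ne; exists z.
by rewrite sup0 sqrtr_ge0.
Qed.

Lemma specnorm_ge0 (R : realType) (m n : nat) (P : 'M[R]_(m, n)) :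
  0 <= specnorm P.
Proof.
rewrite /specnorm.
case: (pselect ([set vnorm (P *m x) | x in [set x : 'cV[R]_n | vnorm x = 1]] !=set0)) => ne.
  case: ne => z Sz. apply: le_trans (ub_le_sup (specnorm_ub P) Sz).
  by case: Sz => x _ <-; rewrite sqrtr_ge0.
have -> : [set vnorm (P *m x) | x in [set x : 'cV[R]_n | vnorm x = 1]] = set0.
  by apply/seteqP; split => // z Sz; exfalso; apply: ne; exists z.
by rewrite sup0.
Qed.

Lemma bnd_specnorm (R : realType) (m n : nat) (P : 'M[R]_(m, n)) :
  bnd P (specnorm P ^+ 2).
Proof.
move=> x. have [x0|xn0] := eqVneq (sq x) 0.
  by rewrite (sq_eq0 x0) mulmx0 !sq0 mulr0.
have sx : 0 < sq x by rewrite lt_def xn0 sq_ge0.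
pose s := vnorm x. have s0 : 0 < s by rewrite /s vnormE sqrtr_gt0.
have ss : s ^+ 2 = sq x by rewrite /s vnormE sqr_sqrtr // sq_ge0.
pose y := s^-1 *: x.
have hy1 : vnorm y = 1.
  rewrite vnormE /y sqZ -ss exprVn mulVf ?sqrtr1 //.
  by rewrite expf_neq0 // gt_eqF.
have : vnorm (P *m y) <= specnorm P.
  apply: (ub_le_sup (specnorm_ub P)). by exists y.
rewrite /y -scalemxAr vnormE sqZ -ss.
have h0 : 0 <= s^-1 ^+ 2 * sq (P *m x) by rewrite mulr_ge0 ?sqr_ge0 ?sq_ge0.
move=> h. have h2 : s^-1 ^+ 2 * sq (P *m x) <= specnorm P ^+ 2.
  rewrite -[X in X <= _](sqr_sqrtr h0). rewrite ler_pXn2r // ?nnegrE ?sqrtr_ge0 //.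
  exact: specnorm_ge0.
have : sq (P *m x) = s ^+ 2 * (s^-1 ^+ 2 * sq (P *m x)).
  by rewrite mulrA -exprMn mulfV ?gt_eqF // expr1n mul1r.
move=> ->. rewrite mulrC. apply: ler_wpM2r => //. by rewrite sqr_ge0.
Qed.

Lemma bilD (R : realType) (n : nat) (P Q : 'M[R]_n) (x y : 'cV[R]_n) :
  bil (P + Q) x y = bil P x y + bil Q x y.
Proof. by rewrite /bil mulmxDr mulmxDl mxE. Qed.

Lemma pd_unit (R : realType) (n : nat) (A : 'M[R]_n) : is_pd A -> A \in unitmx.
Proof.
move=> [sA pA]. rewrite unitmxE unitfE. apply/negP => /det0P [v vn0 vA].
have hx : v^T != 0.
  apply: contra vn0 => /eqP h. by rewrite -[v]trmxK h trmx0.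
have := pA _ hx. have h0 : A *m v^T = 0.
  by rewrite -sA -trmx_mul vA trmx0.
by rewrite trmxK -mulmxA h0 mulmx0 mxE ltxx.
Qed.

Lemma pd_psd (R : realType) (n : nat) (A : 'M[R]_n) : is_pd A -> is_psd A.
Proof.
move=> [sA pA]; split => // x. have [->|xn0] := eqVneq x 0.
  by rewrite mulmx0 mxE.
exact: ltW (pA x xn0).
Qed.

Lemma pd_add (R : realType) (n : nat) (A B : 'M[R]_n) : is_pd A -> is_psd B -> is_pd (A + B).
Proof.
move=> [sA pA] [sB pB]; split; first by rewrite /Defs.is_sym linearD /= sA sB.
move=> x xn0. rewrite -/(bil _ _ _) bilD. apply: ltr_wpDr; first exact: pB. exact: pA.
Qed.

Lemma inv_sym (R : realType) (n : nat) (A : 'M[R]_n) : Defs.is_sym A -> Defs.is_sym (invmx A).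
Proof. by move=> sA; rewrite /Defs.is_sym trmx_inv sA. Qed.

Lemma sqrt_free (R : realType) (s K g : R) : 0 <= s -> 0 <= K ->
  g ^+ 2 <= K * s ^+ 2 -> g <= (K + 1) * s.
Proof.
move=> s0 K0 h. rewrite leNgt; apply/negP => hlt.
have h1 : 0 <= (K + 1) * s by rewrite mulr_ge0 // addr_ge0.
have h2 : ((K + 1) * s) ^+ 2 < g ^+ 2.
  by rewrite ltr_pXn2r // ?nnegrE //; apply: le_trans (ltW hlt).
have h3 : K * s ^+ 2 <= ((K + 1) * s) ^+ 2.
  rewrite exprMn ler_wpM2r ?sqr_ge0 //. nra.
have := lt_le_trans h2 h. by rewrite ltNge h3.
Qed.

Lemma sq_bil1 (R : realType) (n : nat) (x : 'cV[R]_n) : sq x = bil 1%:M x x.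
Proof. exact: sqE. Qed.

Lemma bil_inv (R : realType) (n : nat) (P : 'M[R]_n) (x : 'cV[R]_n) :
  P \in unitmx -> bil P x (invmx P *m x) = bil 1%:M x x.
Proof. move=> u. by rewrite /bil -mulmxA (mulmxA P) mulmxV // mul1mx mulmx1. Qed.

Lemma dot_bnd (R : realType) (n : nat) (P : 'M[R]_n) K (x : 'cV[R]_n) :
  0 <= K -> bnd P K -> bil 1%:M x (P *m x) <= (K + 1) * sq x.
Proof.
move=> K0 h. apply: sqrt_free => //; first exact: sq_ge0.
rewrite bil1. apply: le_trans (vCS _ _) _.
rewrite mulrC expr2 mulrA. apply: ler_wpM2r; first exact: sq_ge0. exact: h.
Qed.

Lemma lower (R : realType) (n : nat) (P : 'M[R]_n) K (x : 'cV[R]_n) :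
  is_psd P -> P \in unitmx -> 0 <= K -> bnd (invmx P) K ->
  sq x <= (K + 1) * bil P x x.
Proof.
move=> psP u K0 hK. have [sP pP] := psP.
set y := invmx P *m x.
have e1 : sq x = bil P x y by rewrite bil_inv // -sqE.
have e2 : bil P y y = bil 1%:M x y.
  rewrite /bil /y trmx_mul (inv_sym sP) -(mulmxA x^T (invmx P)) mulVmx //.
have hg : bil P y y <= (K + 1) * sq x.
  by rewrite e2; apply: dot_bnd.
have hcs := CS x y psP. rewrite -e1 in hcs.
have f0 : 0 <= bil P x x := pP x.
have s0 := sq_ge0 x.
have g0 : 0 <= bil P y y := pP y.
have [->|sn0] := eqVneq (sq x) 0; first by rewrite mulr_ge0 // addr_ge0.
have sp : 0 < sq x by rewrite lt_def sn0 s0.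
nra.
Qed.

Lemma aux1 (R : realType) (s c d t : R) : 0 <= s -> 0 <= c -> 0 <= t ->
  s <= c * d -> d ^+ 2 <= s * t -> s <= c ^+ 2 * t.
Proof.
move=> s0 c0 t0 h1 h2.
have [->|sn0] := eqVneq s 0; first by rewrite mulr_ge0 ?sqr_ge0.
have sp : 0 < s by rewrite lt_def sn0 s0.
have h3 : s ^+ 2 <= c ^+ 2 * d ^+ 2.
  rewrite -exprMn ler_pXn2r // ?nnegrE //. exact: le_trans h1.
have h4 : s ^+ 2 <= c ^+ 2 * (s * t).
  apply: le_trans h3 _. apply: ler_wpM2l => //. exact: sqr_ge0.
rewrite expr2 mulrA mulrAC in h4.
by rewrite -(ler_pM2r sp).
Qed.

Lemma bil_Minv (R : realType) (n : nat) (M : 'M[R]_n) (y : 'cV[R]_n) :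
  M \in unitmx -> bil M (invmx M *m y) (invmx M *m y) = bil 1%:M (invmx M *m y) y.
Proof.
move=> u. by rewrite /bil -mulmxA (mulmxA M) mulmxV // mul1mx mulmx1.
Qed.

Lemma inv_bnd (R : realType) (n : nat) (A Rg : 'M[R]_n) K :
  is_pd A -> is_psd Rg -> 0 <= K -> bnd (invmx A) K ->
  bnd (invmx (A + Rg)) ((K + 1) ^+ 2).
Proof.
move=> pdA psR K0 hK y.
have pdM := pd_add pdA psR. have uM := pd_unit pdM. have uA := pd_unit pdA.
set z := invmx (A + Rg) *m y.
have h1 := lower z (pd_psd pdA) uA K0 hK.
have h2 : bil A z z <= bil (A + Rg) z z.
  by rewrite bilD lerDl; case: psR => _; apply.
have h3 : bil (A + Rg) z z = bil 1%:M z y by rewrite /z bil_Minv.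
have h4 : bil 1%:M z y ^+ 2 <= sq z * sq y by rewrite bil1; apply: vCS.
apply: (aux1 (d := bil 1%:M z y)) => //.
- exact: sq_ge0.
- by rewrite addr_ge0.
- exact: sq_ge0.
- rewrite -h3. apply: le_trans h1 _. apply: ler_wpM2l => //. by rewrite addr_ge0.
Qed.

Lemma ebetaE (R : realType) (N n k : nat) (H : 'M[R]_(N, n)) (Y : 'M[R]_(N, k))
  (Rg : 'M[R]_n) (c : nat) :
  H^T *m H \in unitmx -> H^T *m H + Rg \in unitmx ->
  e_beta H Y Rg c = - (invmx (H^T *m H) *m (Fmat H Rg ^+ c.+1 *m (H^T *m Y))).
Proof.
move=> uA uM.
rewrite /e_beta /beta_hr /beta_opt.
set A := H^T *m H. set M := A + Rg. set HY := H^T *m Y.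
have -> : Fmat H Rg = Rg *m invmx M by [].
set F := Rg *m invmx M.
rewrite -mulmx_suml. set S := \sum_(i < c.+1) F ^+ i.
have AF : A *m invmx M = 1 - F.
  apply/eqP; rewrite eq_sym subr_eq addrC /F -mulmxDl.
  by rewrite [Rg + A]addrC mulmxV.
have tel : (1 - F) * S = 1 - F ^+ c.+1.
  by rewrite -opprB mulNr -subrX1 opprB.
have key : invmx M *m S = invmx A *m (1 - F ^+ c.+1).
  rewrite -tel -AF -mulmxE mulmxA mulmxA mulVmx // mul1mx.
  done.
rewrite mulmxA key -mulmxA mulmxBl mul1mx mulmxBr.
by rewrite addrAC subrr add0r.
Qed.

Lemma bil_inv_sw (R : realType) (n : nat) (M : 'M[R]_n) (x : 'cV[R]_n) :
  Defs.is_sym M -> M \in unitmx ->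
  bil (invmx M) x x = bil M (invmx M *m x) (invmx M *m x).
Proof.
move=> sM uM. rewrite /bil trmx_mul (inv_sym sM).
by rewrite -(mulmxA (x^T *m invmx M)) (mulmxA M) mulmxV // mul1mx.
Qed.

Lemma bil_M1 (R : realType) (n : nat) (M : 'M[R]_n) (y : 'cV[R]_n) :
  bil M y y = bil 1%:M y (M *m y).
Proof. by rewrite /bil mulmx1 mulmxA. Qed.

Lemma contract (R : realType) (n : nat) (A Rg : 'M[R]_n) KA KM (x : 'cV[R]_n) :
  is_pd A -> is_psd Rg -> 0 <= KA -> bnd (invmx A) KA -> 0 <= KM -> bnd (A + Rg) KM ->
  bil (invmx (A + Rg)) (Rg *m invmx (A + Rg) *m x) (Rg *m invmx (A + Rg) *m x)
  <= (1 - ((KA + 1) * (KM + 1))^-1) * bil (invmx (A + Rg)) x x.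
Proof.
move=> pdA psR KA0 hKA KM0 hKM.
have pdM := pd_add pdA psR. have uM := pd_unit pdM. have uA := pd_unit pdA.
have [sM _] := pdM. have [sR pR] := psR. have psM := pd_psd pdM.
set M := A + Rg. set Mi := invmx M.
rewrite (bil_inv_sw x sM uM) -/Mi.
set y := Mi *m x.
rewrite -mulmxA -/y.
set w := Mi *m (Rg *m y).
set s := bil Mi (Rg *m y) (Rg *m y).
have e1 : s = bil Rg y w.
  by rewrite /s /bil /w trmx_mul sR !mulmxA.
have e2 : bil M w w = bil Rg y w.
  rewrite /w bil_Minv // -/w.
  transitivity (bil Rg w y); first by rewrite /bil mulmx1 mulmxA.
  exact: bil_sym.
have s0 : 0 <= s by rewrite e1 -e2; case: psM => _; apply.
have hcs := CS y w psR. rewrite -e1 in hcs.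
have hw : bil Rg w w <= s by rewrite e1 -e2 /M bilD lerDr; case: (pd_psd pdA) => _; apply.
have hsr : s <= bil Rg y y.
  have [->|sn0] := eqVneq s 0; first exact: pR.
  have sp : 0 < s by rewrite lt_def sn0 s0.
  rewrite -(ler_pM2r sp) -expr2. apply: le_trans hcs _.
  apply: ler_wpM2l => //. exact: pR.
have hlow := lower y (pd_psd pdA) uA KA0 hKA.
have hup : bil M y y <= (KM + 1) * sq y by rewrite bil_M1; apply: dot_bnd.
have eMy : bil M y y = bil A y y + bil Rg y y by rewrite bilD.
set a := bil A y y in hlow eMy. set m := bil M y y in hup eMy *.
set r := bil Rg y y in hsr eMy.
have Cp : 0 < (KA + 1) * (KM + 1) by rewrite mulr_gt0 // ltr_wpDl.
have hma : m <= (KA + 1) * (KM + 1) * a.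
  apply: le_trans hup _. rewrite [(KA + 1) * _]mulrC -mulrA. apply: ler_wpM2l; first by rewrite addr_ge0.
  done.
have : ((KA + 1) * (KM + 1))^-1 * m <= a by rewrite ler_pdivrMl.
move=> h. rewrite mulrBl mul1r. lra.
Qed.

Lemma q_ge0 (R : realType) (KA KM : R) : 0 <= KA -> 0 <= KM ->
  0 <= 1 - ((KA + 1) * (KM + 1))^-1.
Proof.
move=> KA0 KM0. have h : 1 <= (KA + 1) * (KM + 1) by nra.
rewrite subr_ge0 invf_le1 //. exact: lt_le_trans ltr01 h.
Qed.

Lemma q_lt1 (R : realType) (KA KM : R) : 0 <= KA -> 0 <= KM ->
  1 - ((KA + 1) * (KM + 1))^-1 < 1.
Proof.
move=> KA0 KM0. have h : 0 < (KA + 1) * (KM + 1) by nra.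
by rewrite ltrBlDr ltrDl invr_gt0.
Qed.

Lemma iter_contract (R : realType) (n : nat) (A Rg : 'M[R]_n) KA KM j (x : 'cV[R]_n) :
  is_pd A -> is_psd Rg -> 0 <= KA -> bnd (invmx A) KA -> 0 <= KM -> bnd (A + Rg) KM ->
  bil (invmx (A + Rg)) ((Rg *m invmx (A + Rg)) ^+ j *m x) ((Rg *m invmx (A + Rg)) ^+ j *m x)
  <= (1 - ((KA + 1) * (KM + 1))^-1) ^+ j * bil (invmx (A + Rg)) x x.
Proof.
move=> pdA psR KA0 hKA KM0 hKM.
have q0 : 0 <= 1 - ((KA + 1) * (KM + 1))^-1.
  exact: q_ge0.
elim: j => [|j IH]; first by rewrite !expr0 mul1mx mul1r.
rewrite exprS -mulmxE -mulmxA.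
apply: le_trans (contract _ pdA psR KA0 hKA KM0 hKM) _.
rewrite exprS -mulrA. exact: ler_wpM2l.
Qed.

Lemma powF_bnd (R : realType) (n : nat) (A Rg : 'M[R]_n) KA KM j :
  is_pd A -> is_psd Rg -> 0 <= KA -> bnd (invmx A) KA -> 0 <= KM -> bnd (A + Rg) KM ->
  bnd ((Rg *m invmx (A + Rg)) ^+ j)
    (KM * (KA + 1) * ((1 - ((KA + 1) * (KM + 1))^-1) ^+ j * (frob (invmx (A + Rg)) + 1))).
Proof.
move=> pdA psR KA0 hKA KM0 hKM x.
have pdM := pd_add pdA psR. have uM := pd_unit pdM. have uA := pd_unit pdA.
have [sM _] := pdM. have psM := pd_psd pdM.
set M := A + Rg. set Mi := invmx M. set q := 1 - _.
set z := _ *m x.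
have h1 : sq z <= KM * (KA + 1) * bil Mi z z.
  rewrite (bil_inv_sw z sM uM) -/Mi. set y := Mi *m z.
  have -> : z = M *m y by rewrite /y mulmxA mulmxV // mul1mx.
  apply: le_trans (hKM _) _. rewrite -mulrA. apply: ler_wpM2l => //.
  apply: le_trans (lower y (pd_psd pdA) uA KA0 hKA) _.
  apply: ler_wpM2l; first by rewrite addr_ge0.
  rewrite /M bilD lerDl. by case: psR => _; apply.
have h2 := iter_contract j x pdA psR KA0 hKA KM0 hKM.
have h3 : bil Mi x x <= (frob Mi + 1) * sq x.
  by rewrite bil_M1; apply: dot_bnd; [exact: frob_ge0 | exact: bnd_frob].
apply: le_trans h1 _. rewrite -!mulrA. apply: ler_wpM2l => //.
apply: ler_wpM2l; first by rewrite addr_ge0.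
apply: le_trans h2 _. apply: ler_wpM2l => //.
by rewrite exprn_ge0 // q_ge0.
Qed.

Lemma bnd_opp (R : realType) (m n : nat) (P : 'M[R]_(m, n)) K : bnd P K -> bnd (- P) K.
Proof. by move=> h x; rewrite mulNmx sqN. Qed.

Lemma specnorm_lt (R : realType) (m n : nat) (P : 'M[R]_(m, n)) K eps :
  bnd P K -> 0 <= K -> K < eps ^+ 2 -> 0 < eps -> specnorm P < eps.
Proof.
move=> h K0 Ke e0. apply: le_lt_trans (specnorm_le h K0) _.
rewrite -[X in _ < X](@ger0_norm _ eps) ?ltW // -sqrtr_sqr ltr_sqrt //.
by rewrite exprn_gt0.
Qed.

Lemma small (R : realType) (t KK u : R) : 0 <= t -> t <= 1 -> 0 <= KK ->
  0 <= u -> u < t / (KK + 1) -> u ^+ 2 * KK <= t.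
Proof.
move=> t0 t1 K0 u0 ut.
have Kp : 0 < KK + 1 by rewrite ltr_wpDl.
have h : u * (KK + 1) <= t by rewrite -ler_pdivlMr // ltW.
nra.
Qed.

Lemma pick_t (R : realType) (D eps : R) : 0 <= D -> 0 < eps ->
  [/\ 0 < eps ^+ 2 / (D + eps ^+ 2 + 1), eps ^+ 2 / (D + eps ^+ 2 + 1) <= 1
    & D * (eps ^+ 2 / (D + eps ^+ 2 + 1)) < eps ^+ 2].
Proof.
move=> D0 e0. have e2 : 0 < eps ^+ 2 by rewrite exprn_gt0.
have Dp : 0 < D + eps ^+ 2 + 1 by rewrite -addrA ltr_wpDl // addr_gt0.
split.
- by rewrite divr_gt0.
- rewrite ler_pdivrMr // mul1r. lra.
- rewrite mulrA ltr_pdivrMr // mulrC ltr_pM2l //. lra.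
Qed.

Unset Implicit Arguments.
Theorem theorem1 (R : realType) (N n k : nat)
  (H : 'M[R]_(N, n)) (Y : 'M[R]_(N, k)) (c : nat) :
  is_pd (H^T *m H) ->
  (forall eps : R, 0 < eps -> exists2 delta : R, 0 < delta &
     forall Rg : 'M[R]_n, is_psd Rg -> specnorm Rg < delta ->
       specnorm (e_beta H Y Rg c) < eps) /\
  (forall eps : R, 0 < eps -> exists2 delta : R, 0 < delta &
     forall Rg : 'M[R]_n, is_psd Rg -> specnorm Rg < delta ->
       specnorm (invmx (H^T *m H + Rg) *m Fmat H Rg *m (H^T *m Y)) < eps) /\
  (forall Rg : 'M[R]_n, is_psd Rg -> spectral_radius (Fmat H Rg) < 1 ->
     (fun c' : nat => specnorm (e_beta H Y Rg c')) @ \oo --> (0 : R)).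
Proof.
move=> pdA.
have uA := pd_unit pdA.
set A := H^T *m H in pdA uA *.
set HY := H^T *m Y.
pose KA := frob (invmx A). have KA0 : 0 <= KA := frob_ge0 _.
have hKA : bnd (invmx A) KA := bnd_frob _.
pose KK := (KA + 1) ^+ 2. have KK0 : 0 <= KK by rewrite sqr_ge0.
pose KH := frob HY. have KH0 : 0 <= KH := frob_ge0 _.
have hKH : bnd HY KH := bnd_frob _.
have hF : forall Rg t, is_psd Rg -> 0 <= t -> t <= 1 -> specnorm Rg < t / (KK + 1) ->
    bnd (Fmat H Rg) t.
  move=> Rg t psR t0 t1 hs.
  have := bnd_mul (sqr_ge0 (specnorm Rg)) (bnd_specnorm Rg) (inv_bnd pdA psR KA0 hKA).
  move/bnd_le; apply. rewrite -/KK. apply: small => //. exact: specnorm_ge0.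
split; last split.
- move=> eps e0.
  have D0 : 0 <= KA * KH by rewrite mulr_ge0.
  have [tp t1 tD] := pick_t D0 e0.
  set t := eps ^+ 2 / _ in tp t1 tD.
  exists (t / (KK + 1)); first by rewrite divr_gt0 // ltr_wpDl.
  move=> Rg psR hs.
  have uM := pd_unit (pd_add pdA psR).
  rewrite ebetaE //.
  apply: (@specnorm_lt _ _ _ _ (KA * (t * KH))) => //.
  + apply: bnd_opp. apply: bnd_mul => //. apply: bnd_mul; last exact: hKH.
      exact: ltW.
    apply: bnd_pow (ltW tp) t1 (hF Rg t psR (ltW tp) t1 hs).
  + by apply: mulr_ge0 => //; apply: mulr_ge0 => //; exact: ltW.
  + by have -> : KA * (t * KH) = KA * KH * t by ring.
- move=> eps e0.
  have D0 : 0 <= KK * KH by rewrite mulr_ge0.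
  have [tp t1 tD] := pick_t D0 e0.
  set t := eps ^+ 2 / _ in tp t1 tD.
  exists (t / (KK + 1)); first by rewrite divr_gt0 // ltr_wpDl.
  move=> Rg psR hs.
  apply: (@specnorm_lt _ _ _ _ (KK * t * KH)) => //.
  + apply: bnd_mul; first by rewrite mulr_ge0 // ltW.
      apply: bnd_mul => //; first exact: inv_bnd pdA psR KA0 hKA.
      apply: hF => //. exact: ltW.
    exact: hKH.
  + by apply: mulr_ge0 => //; apply: mulr_ge0 => //; exact: ltW.
  + by have -> : KK * t * KH = KK * KH * t by ring.
- move=> Rg psR _.
  have pdM := pd_add pdA psR. have uM := pd_unit pdM.
  pose KM := frob (A + Rg). have KM0 : 0 <= KM := frob_ge0 _.
  have hKM : bnd (A + Rg) KM := bnd_frob _.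
  pose q := 1 - ((KA + 1) * (KM + 1))^-1.
  have q0 : 0 <= q := q_ge0 KA0 KM0.
  have q1 : q < 1 := q_lt1 KA0 KM0.
  pose E := KA * (KM * (KA + 1) * (frob (invmx (A + Rg)) + 1)) * KH.
  have E0 : 0 <= E by rewrite /E !mulr_ge0 ?addr_ge0 ?frob_ge0.
  have hb : forall j, bnd (e_beta H Y Rg j) (E * q ^+ j.+1).
    move=> j. rewrite ebetaE //. apply: bnd_opp.
    have := bnd_mul KA0 hKA (bnd_mul _ (powF_bnd j.+1 pdA psR KA0 hKA KM0 hKM) hKH).
    move=> h. apply: bnd_le; first apply: h.
      by rewrite !mulr_ge0 ?addr_ge0 ?exprn_ge0 ?frob_ge0.
    rewrite le_eqVlt; apply/orP; left; apply/eqP. rewrite /E -/q. ring.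
  have hq : q ^+ j @[j --> \oo] --> (0:R) by apply: cvg_expr; rewrite ger0_norm.
  apply/cvgrPdist_lt => eps e0.
  have ep : 0 < eps ^+ 2 / (E + 1) by rewrite divr_gt0 ?exprn_gt0 // ltr_wpDl.
  have hev : \forall t \near \oo, `|0 - q ^+ t| < eps ^+ 2 / (E + 1).
    by move/cvgrPdist_lt : hq => /(_ _ ep).
  apply: filterS hev => j hj.
  rewrite sub0r normrN ger0_norm; last exact: specnorm_ge0.
  rewrite sub0r normrN ger0_norm ?exprn_ge0 // in hj.
  apply: (specnorm_lt (hb j)); [by rewrite mulr_ge0 ?exprn_ge0 | | done].
  have Ep : 0 < E + 1 by rewrite ltr_wpDl.
  rewrite ltr_pdivlMr // in hj.
  apply: le_lt_trans hj. rewrite exprS mulrC -mulrA mulrC.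
  have qj : 0 <= q ^+ j by rewrite exprn_ge0.
  have : q * E <= E + 1 by nra.
  move=> h. rewrite -mulrA [E * q]mulrC. exact: ler_wpM2l.
Qed.
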